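(* The functor $\mathcal M_{\max}$ is (admits the structure of) a lax monoidal functor from $(\mathbf{Ord},\times,(\mathbf 1,=))$ to $(\mathbf{Ord},\times,(\mathbf 1,=))$.
   Context: $\mathbf{Ord}$ is the category of posets and monotone maps, with the cartesian product $\times$ (product order) and the one-point poset $\mathbf 1$ as monoidal structure. For a poset $(X,\le_X)$, $\mathcal M(X)$ is the set of nonempty finite subsets of $X$ whose elements are pairwise incomparable, ordered by $S\le_{\mathcal M(X)}T$ iff every $x\in S$ has some $y\in T$ with $x\le_X y$. For $S\subseteq X$, $S^{\circ}$ is the set of maximal elements of $S$. The functor $\mathcal M_{\max}:\mathbf{Ord}\to\mathbf{Ord}$ is $\mathcal M_{\max}(X)=(\mathcal M(X),\le_{\mathcal M(X)})$, $\mathcal M_{\max}(f)(S)=(f(S))^{\circ}$. *)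

(* Defs.v *)
(* Posets are arbitrary (not necessarily decidable) types with a
   Prop-valued partial order; subsets are predicates X -> Prop, compared up to
   extensional equality. *)
From Stdlib Require Import List.

Record Poset := {
  carrier :> Type;
  le : carrier -> carrier -> Prop;
  le_refl : forall x, le x x;
  le_antisym : forall x y, le x y -> le y x -> x = y;
  le_trans : forall x y z, le x y -> le y z -> le x z
}.
Arguments le {p} _ _.

Definition monotone {X Y : Poset} (f : X -> Y) : Prop :=
  forall x y, le x y -> le (f x) (f y).

Definition one : Poset.
Proof.
  refine {| carrier := unit; le := fun x y => x = y |}.
  - reflexivity.
  - intros x y h _; exact h.
  - intros x y z h1 h2; now rewrite h1.
Defined.

Definition prodP (X Y : Poset) : Poset.
Proof.
  refine {| carrier := (X * Y)%type;
            le := fun p q => le (fst p) (fst q) /\ le (snd p) (snd q) |}.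
  - intros [a b]; split; apply le_refl.
  - intros [a b] [c d] [h1 h2] [h3 h4]; simpl in *.
    f_equal; apply le_antisym; assumption.
  - intros [a b] [c d] [e f] [h1 h2] [h3 h4]; simpl in *.
    split; eapply le_trans; eassumption.
Defined.

Definition set (X : Type) := X -> Prop.
Definition seteq {X : Type} (A B : set X) : Prop := forall x, A x <-> B x.

Definition finite_set {X : Type} (S : set X) : Prop :=
  exists l : list X, forall x, S x <-> In x l.
Definition nonempty_set {X : Type} (S : set X) : Prop := exists x, S x.
Definition antichain {X : Poset} (S : set X) : Prop :=
  forall x y, S x -> S y -> x <> y -> ~ le x y /\ ~ le y x.

(* membership in the carrier of M(X) *)
Definition isM {X : Poset} (S : set X) : Prop :=
  finite_set S /\ nonempty_set S /\ antichain S.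

Definition leM {X : Poset} (S T : set X) : Prop :=
  forall x, S x -> exists y, T y /\ le x y.

Definition maxel {X : Poset} (S : set X) : set X :=
  fun x => S x /\ forall y, S y -> le x y -> x = y.

Definition image {X Y : Type} (f : X -> Y) (S : set X) : set Y :=
  fun y => exists x, S x /\ f x = y.

Definition Mmap {X Y : Poset} (f : X -> Y) (S : set X) : set Y :=
  maxel (image f S).

Definition assoc {X Y Z : Poset} (p : prodP (prodP X Y) Z) : prodP X (prodP Y Z) :=
  (fst (fst p), (snd (fst p), snd p)).
Definition lunit {X : Poset} (p : prodP one X) : X := snd p.
Definition runit {X : Poset} (p : prodP X one) : X := fst p.
Definition pmap {X X' Y Y' : Poset} (f : X -> X') (g : Y -> Y')
  (p : prodP X Y) : prodP X' Y' := (f (fst p), g (snd p)).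

Definition Mmax_functor : Prop :=
  (forall (X : Poset) (S : set X), leM S S) /\
  (forall (X : Poset) (S T U : set X), leM S T -> leM T U -> leM S U) /\
  (forall (X : Poset) (S T : set X), isM S -> isM T -> leM S T -> leM T S -> seteq S T) /\
  (forall (X Y : Poset) (f : X -> Y), monotone f ->
     forall S, isM S -> isM (Mmap f S)) /\
  (forall (X Y : Poset) (f : X -> Y), monotone f ->
     forall S T, isM S -> isM T -> leM S T -> leM (Mmap f S) (Mmap f T)) /\
  (forall (X : Poset) (S : set X), isM S -> seteq (Mmap (fun x : X => x) S) S) /\
  (forall (X Y Z : Poset) (f : X -> Y) (g : Y -> Z), monotone f -> monotone g ->
     forall S, isM S -> seteq (Mmap (fun x => g (f x)) S) (Mmap g (Mmap f S))).

(* A lax monoidal structure (eps, mu) on M_max, for (Ord, x, 1) on both sides.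
   eps : 1 -> M(1) is a monotone map from the one-point poset, i.e. an element
   of M(1); mu_{X,Y} : M(X) x M(Y) -> M(X x Y) is given on representatives. *)
Definition lax_monoidal_structure
  (eps : set one)
  (mu : forall X Y : Poset, set X -> set Y -> set (prodP X Y)) : Prop :=
  isM eps /\
  (forall (X Y : Poset) (S : set X) (T : set Y),
     isM S -> isM T -> isM (mu X Y S T)) /\
  (forall (X Y : Poset) (S S' : set X) (T T' : set Y),
     isM S -> isM S' -> isM T -> isM T' ->
     leM S S' -> leM T T' -> leM (mu X Y S T) (mu X Y S' T')) /\
  (forall (X X' Y Y' : Poset) (f : X -> X') (g : Y -> Y'),
     monotone f -> monotone g ->
     forall (S : set X) (T : set Y), isM S -> isM T ->
     seteq (mu X' Y' (Mmap f S) (Mmap g T))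
           (Mmap (pmap f g) (mu X Y S T))) /\
  (forall (X Y Z : Poset) (S : set X) (T : set Y) (U : set Z),
     isM S -> isM T -> isM U ->
     seteq (Mmap (@assoc X Y Z) (mu (prodP X Y) Z (mu X Y S T) U))
           (mu X (prodP Y Z) S (mu Y Z T U))) /\
  (forall (X : Poset) (S : set X), isM S ->
     seteq (Mmap (@lunit X) (mu one X eps S)) S) /\
  (forall (X : Poset) (S : set X), isM S ->
     seteq (Mmap (@runit X) (mu X one S eps)) S).

(* Main.v *)
Require Import Defs.
From Stdlib Require Import List Classical.

Section Gen.
Context {X : Poset}.

Lemma dom_list : forall (l : list X) (A : set X), (forall x, A x -> In x l) ->
  forall a, A a -> exists m, maxel A m /\ le a m.
Proof.
  induction l as [|h t IH]; intros A HA a Ha.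
  - destruct (HA a Ha).
  - set (A' := fun x => A x /\ x <> h).
    assert (HA' : forall x, A' x -> In x t).
    { intros x [Ax Nx]. destruct (HA x Ax); [congruence|assumption]. }
    assert (Hh : A h -> exists m, maxel A m /\ le h m).
    { intros Ah. destruct (classic (forall y, A y -> le h y -> h = y)) as [Hm|Hm].
      - exists h; split; [split; assumption| apply le_refl].
      - apply not_all_ex_not in Hm as [y Hy].
        apply imply_to_and in Hy as [Ay Hy]. apply imply_to_and in Hy as [hy Hy].
        destruct (IH A' HA' y (conj Ay (fun e => Hy (eq_sym e)))) as [m [[[Am Nm] Mm] ym]].
        exists m; split; [split; [assumption|] | eapply le_trans; eassumption].
        intros z Az mz. destruct (classic (z = h)) as [->|Nz].
        + exfalso. apply Nm. apply le_antisym; [assumption|]. eapply le_trans; eassumption.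
        + apply Mm; [split|]; assumption. }
    destruct (classic (a = h)) as [->|Na]; [apply Hh; assumption|].
    destruct (IH A' HA' a (conj Ha Na)) as [m [[[Am Nm] Mm] am]].
    destruct (classic (A h /\ le m h)) as [[Ah mh]|mh].
    + destruct (Hh Ah) as [m' [Mm' hm']]. exists m'; split; [assumption|].
      eapply le_trans; [eassumption|]. eapply le_trans; eassumption.
    + exists m; split; [split; [assumption|] | assumption].
      intros z Az mz. destruct (classic (z = h)) as [->|Nz]; [tauto|].
      apply Mm; [split|]; assumption.
Qed.

Lemma dom {A : set X} : finite_set A -> forall a, A a -> exists m, maxel A m /\ le a m.
Proof. intros [l Hl]. apply (dom_list l). intros x Ax; apply Hl, Ax. Qed.

Lemma sub_finite : forall (l : list X) (A : set X), (forall x, A x -> In x l) -> finite_set A.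
Proof.
  induction l as [|h t IH]; intros A HA.
  - exists nil; intros x; split; [intros Ax; apply (HA x Ax)|intros []].
  - destruct (IH (fun x => A x /\ x <> h)) as [l' Hl'].
    { intros x [Ax Nx]. destruct (HA x Ax); [congruence|assumption]. }
    destruct (classic (A h)) as [Ah|Nh].
    + exists (h :: l'); intros x; split.
      * intros Ax. destruct (classic (x = h)) as [->|Nx]; [left; reflexivity|].
        right; apply Hl'; split; assumption.
      * intros [<-|Hx]; [assumption|apply Hl' in Hx; tauto].
    + exists l'; intros x; split.
      * intros Ax. apply Hl'; split; [assumption|]. intros ->; contradiction.
      * intros Hx; apply Hl' in Hx; tauto.
Qed.

Lemma maxel_finite (A : set X) : finite_set A -> finite_set (maxel A).
Proof. intros [l Hl]. apply (sub_finite l). intros x [Ax _]; apply Hl, Ax. Qed.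

Lemma maxel_antichain (A : set X) : antichain (maxel A).
Proof.
  intros x y [Ax Mx] [Ay My] Nxy; split; intros H.
  - apply Nxy, Mx; assumption.
  - apply Nxy; symmetry; apply My; assumption.
Qed.

Lemma antichain_le (A : set X) : antichain A -> forall x y, A x -> A y -> le x y -> x = y.
Proof.
  intros HA x y Ax Ay H. destruct (classic (x = y)) as [|N]; [assumption|].
  exfalso. apply (proj1 (HA x y Ax Ay N)), H.
Qed.

Lemma maxel_of_antichain (A : set X) : antichain A -> seteq (maxel A) A.
Proof.
  intros HA x; split; [intros [Ax _]; exact Ax|].
  intros Ax; split; [exact Ax|]. intros y Ay; apply (antichain_le A HA); assumption.
Qed.

Lemma maxel_ext (A B : set X) : seteq A B -> seteq (maxel A) (maxel B).
Proof.
  intros E x; split; intros [Ax Mx]; split; try (apply E; assumption);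
  intros y Ay; apply Mx; apply E; assumption.
Qed.

Lemma maxel_dom (A B : set X) : (forall b, B b -> A b) ->
  (forall a, A a -> exists b, B b /\ le a b) -> seteq (maxel A) (maxel B).
Proof.
  intros BA D x; split.
  - intros [Ax Mx]. destruct (D x Ax) as [b [Bb xb]].
    assert (x = b) by (apply Mx; [apply BA|]; assumption). subst b.
    split; [assumption|]. intros y By; apply Mx, BA, By.
  - intros [Bx Mx]. split; [apply BA, Bx|]. intros a Aa xa.
    destruct (D a Aa) as [b [Bb ab]].
    assert (x = b) by (apply Mx; [assumption| eapply le_trans; eassumption]). subst b.
    apply le_antisym; assumption.
Qed.
End Gen.

Lemma image_finite {X Y : Type} (f : X -> Y) (S : set X) :
  finite_set S -> finite_set (image f S).
Proof.
  intros [l Hl]. exists (map f l). intros y; rewrite in_map_iff; split.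
  - intros [x [Sx <-]]. exists x; split; [reflexivity|apply Hl, Sx].
  - intros [x [<- Hx]]. exists x; split; [apply Hl, Hx|reflexivity].
Qed.

Lemma Mmap_isM {X Y : Poset} (f : X -> Y) (S : set X) : isM S -> isM (Mmap f S).
Proof.
  intros [Fs [[s Ss] As]]. unfold Mmap.
  assert (FI := image_finite f S Fs).
  split; [apply maxel_finite, FI|split; [|apply maxel_antichain]].
  destruct (dom FI (f s)) as [m [Hm _]]; [exists s; split; [assumption|reflexivity]|].
  exists m; exact Hm.
Qed.

Lemma Mmap_mono {X Y : Poset} (f : X -> Y) : monotone f ->
  forall S T, isM S -> isM T -> leM S T -> leM (Mmap f S) (Mmap f T).
Proof.
  intros Hf S T _ [Ft _] H y [[x [Sx <-]] _].
  destruct (H x Sx) as [x' [Tx' xx']].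
  destruct (dom (image_finite f T Ft) (f x')) as [m [Mm Hm]];
    [exists x'; split; [assumption|reflexivity]|].
  exists m; split; [exact Mm|]. eapply le_trans; [apply Hf, xx'|exact Hm].
Qed.

Lemma functor_part : Mmax_functor.
Proof.
  unfold Mmax_functor; split; [|split; [|split; [|split; [|split; [|split]]]]].
  - intros X S x Sx; exists x; split; [assumption|apply le_refl].
  - intros X S T U H1 H2 x Sx. destruct (H1 x Sx) as [y [Ty xy]].
    destruct (H2 y Ty) as [z [Uz yz]]. exists z; split; [assumption|eapply le_trans; eassumption].
  - intros X S T [_ [_ As]] [_ [_ At]] H1 H2 x; split; intros Hx.
    + destruct (H1 x Hx) as [y [Ty xy]]. destruct (H2 y Ty) as [z [Sz yz]].
      assert (x = z) by (apply (antichain_le S As); [| |eapply le_trans]; eassumption). subst z.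
      assert (x = y) by (apply le_antisym; assumption). subst; assumption.
    + destruct (H2 x Hx) as [y [Sy xy]]. destruct (H1 y Sy) as [z [Tz yz]].
      assert (x = z) by (apply (antichain_le T At); [| |eapply le_trans]; eassumption). subst z.
      assert (x = y) by (apply le_antisym; assumption). subst; assumption.
  - intros X Y f _ S HS; apply Mmap_isM, HS.
  - intros X Y f Hf; apply Mmap_mono, Hf.
  - intros X S [_ [_ As]] x. unfold Mmap.
    rewrite <- (maxel_of_antichain S As x).
    apply maxel_ext. intros y; split; [intros [z [Sz <-]]; exact Sz|intros Sy; exists y; split; [exact Sy|reflexivity]].
  - intros X Y Z f g Hf Hg S [Fs _]. unfold Mmap. apply maxel_dom.
    + intros z [y [[[x [Sx <-]] _] <-]]. exists x; split; [assumption|reflexivity].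
    + intros z [x [Sx <-]].
      destruct (dom (image_finite f S Fs) (f x)) as [m [Mm Hm]];
        [exists x; split; [assumption|reflexivity]|].
      exists (g m); split; [exists m; split; [exact Mm|reflexivity]|apply Hg, Hm].
Qed.

Definition mu (X Y : Poset) (S : set X) (T : set Y) : set (prodP X Y) :=
  fun p => S (fst p) /\ T (snd p).

Definition eps : set one := fun _ => True.

Lemma mu_isM (X Y : Poset) (S : set X) (T : set Y) : isM S -> isM T -> isM (mu X Y S T).
Proof.
  intros [[l1 H1] [[s Ss] As]] [[l2 H2] [[t Tt] At]].
  split; [|split].
  - exists (list_prod l1 l2). intros [x y]. unfold mu; simpl. rewrite (in_prod_iff l1 l2 x y).
    rewrite H1, H2; tauto.
  - exists (s, t); split; assumption.
  - intros [x y] [x' y'] [Sx Ty] [Sx' Ty'] N; simpl in *.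
    split; intros [h1 h2]; simpl in *; apply N.
    + f_equal; [apply (antichain_le S As)|apply (antichain_le T At)]; assumption.
    + f_equal; symmetry; [apply (antichain_le S As)|apply (antichain_le T At)]; assumption.
Qed.

Theorem propositionD11 :
  Mmax_functor /\
  exists (eps : set one)
         (mu : forall X Y : Poset, set X -> set Y -> set (prodP X Y)),
    lax_monoidal_structure eps mu.
Proof.
  split; [exact functor_part|].
  exists eps, mu. unfold lax_monoidal_structure.
  split; [|split; [|split; [|split; [|split; [|split]]]]].
  - split; [exists (tt :: nil)|split; [exists tt; exact I|]].
    + intros []; unfold eps; simpl; split; auto.
    + intros [] [] _ _ N; exfalso; apply N; reflexivity.
  - exact mu_isM.
  - intros X Y S S' T T' _ _ _ _ HS HT [x y] [Sx Ty]; simpl in *.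
    destruct (HS x Sx) as [x' [Sx' h1]]. destruct (HT y Ty) as [y' [Ty' h2]].
    exists (x', y'); split; split; assumption.
  - intros X X' Y Y' f g _ _ S T _ _ [y z]; unfold mu, Mmap, maxel, image, pmap; simpl.
    split.
    + intros [[[x [Sx <-]] Mx] [[t [Tt <-]] Mt]].
      split; [exists (x, t); split; [split; assumption|reflexivity]|].
      intros [y' z'] [[x' t'] [[Sx' Tt'] E]] [h1 h2]; simpl in *.
      injection E as <- <-.
      f_equal; [apply Mx|apply Mt]; try assumption.
      * exists x'; split; [assumption|reflexivity].
      * exists t'; split; [assumption|reflexivity].
    + intros [[[x t] [[Sx Tt] E]] M]; simpl in *. injection E as <- <-.
      split; split.
      * exists x; split; [assumption|reflexivity].
      * intros y [x' [Sx' <-]] h.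
        assert (E := M (f x', g t) (ex_intro _ (x', t) (conj (conj Sx' Tt) eq_refl))
                       (conj h (le_refl _ _))).
        injection E as E; exact E.
      * exists t; split; [assumption|reflexivity].
      * intros y [t' [Tt' <-]] h.
        assert (E := M (f x, g t') (ex_intro _ (x, t') (conj (conj Sx Tt') eq_refl))
                       (conj (le_refl _ _) h)).
        injection E as E; exact E.
  - intros X Y Z S T U HS HT HU p.
    rewrite <- (maxel_of_antichain _ (proj2 (proj2 (mu_isM _ _ _ _ HS (mu_isM _ _ _ _ HT HU)))) p).
    unfold Mmap. apply maxel_ext. intros [x [y z]]; unfold image, mu, assoc; simpl; split.
    + intros [[[x' y'] z'] [[[Sx Ty] Uz] E]]; simpl in *. injection E as <- <- <-. tauto.
    + intros [Sx [Ty Uz]]. exists ((x, y), z); simpl; tauto.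
  - intros X S HS p.
    rewrite <- (maxel_of_antichain _ (proj2 (proj2 HS)) p).
    unfold Mmap. apply maxel_ext. intros x; unfold image, mu, lunit, eps; simpl; split.
    + intros [[u x'] [[_ Sx] E]]; simpl in *; subst; assumption.
    + intros Sx; exists (tt, x); simpl; tauto.
  - intros X S HS p.
    rewrite <- (maxel_of_antichain _ (proj2 (proj2 HS)) p).
    unfold Mmap. apply maxel_ext. intros x; unfold image, mu, runit, eps; simpl; split.
    + intros [[x' u] [[Sx _] E]]; simpl in *; subst; assumption.
    + intros Sx; exists (x, tt); simpl; tauto.
Qed.
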